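(* Let $K\ge2$ and $d\ge1$ with $d=2$ or $K\le d+1$. Then the Tammes problem and the Softmax Code problem have the same solutions: $$\operatorname{argmax}_{\mathbf W\in\mathrm{OB}(d,K)}\rho_{\text{one-vs-rest}}(\mathbf W)=\operatorname{argmax}_{\mathbf W\in\mathrm{OB}(d,K)}\rho_{\text{one-vs-one}}(\mathbf W).$$
   Context: $\mathrm{OB}(d,K)$ is the set of real $d\times K$ matrices with unit-norm columns $\mathbf w_1,\dots,\mathbf w_K$. $\operatorname{dist}(\mathbf v,\mathcal W)=\inf\{\|\mathbf v-\mathbf w\|_2:\mathbf w\in\operatorname{conv}(\mathcal W)\}$; $\rho_{\text{one-vs-rest}}(\mathbf W)=\min_k\operatorname{dist}(\mathbf w_k,\{\mathbf w_j\}_{j\ne k})$; $\rho_{\text{one-vs-one}}(\mathbf W)=\min_k\min_{k'\ne k}\|\mathbf w_k-\mathbf w_{k'}\|_2$. *)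

(* Defs.v *)
From HB Require Import structures.
From mathcomp Require Import all_boot all_order all_algebra.
From mathcomp Require Import boolp classical_sets reals.
Set Implicit Arguments. Unset Strict Implicit. Unset Printing Implicit Defensive.
Import Order.TTheory GRing.Theory Num.Theory.
Local Open Scope ring_scope.
Local Open Scope classical_set_scope.

Definition vnorm (R : realType) (d : nat) (v : 'cV[R]_d) : R :=
  Num.sqrt (\sum_(i < d) (v i 0) ^+ 2).

Definition OB (R : realType) (d K : nat) : set 'M[R]_(d, K) :=
  [set W | forall k : 'I_K, vnorm (col k W) = 1].

Definition conv_rest (R : realType) (d K : nat) (W : 'M[R]_(d, K)) (k : 'I_K)
  : set 'cV[R]_d :=
  [set v | exists lam : 'I_K -> R,
      (forall j, 0 <= lam j) /\
      \sum_(j < K | j != k) lam j = 1 /\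
      v = \sum_(j < K | j != k) lam j *: col j W].

Definition dist_rest (R : realType) (d K : nat) (W : 'M[R]_(d, K)) (k : 'I_K) : R :=
  inf [set vnorm (col k W - w) | w in conv_rest W k].

Definition rho_one_vs_rest (R : realType) (d K : nat) (W : 'M[R]_(d, K)) : R :=
  inf [set dist_rest W k | k in [set: 'I_K]].

Definition rho_one_vs_one (R : realType) (d K : nat) (W : 'M[R]_(d, K)) : R :=
  inf [set r | exists (k k' : 'I_K), k' != k /\ r = vnorm (col k W - col k' W)].

Definition is_argmax_OB (R : realType) (d K : nat) (f : 'M[R]_(d, K) -> R)
  (W : 'M[R]_(d, K)) : Prop :=
  @OB R d K W /\ forall W', @OB R d K W' -> f W' <= f W.

(* Main.v *)
Require Import Defs.
From HB Require Import structures.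
From mathcomp Require Import all_boot all_order all_algebra.
From mathcomp Require Import boolp classical_sets reals.
From mathcomp Require Import trigo.
From mathcomp Require Import ring lra zify.
Import Order.TTheory GRing.Theory Num.Theory.
Local Open Scope ring_scope.
Set Implicit Arguments. Unset Strict Implicit. Unset Printing Implicit Defensive.

Section Generic.
Variable R : realType.
Variable d : nat.
Implicit Types u v w : 'cV[R]_d.

Definition dot u v : R := \sum_(i < d) u i 0 * v i 0.

Lemma dotC u v : dot u v = dot v u.
Proof. by apply: eq_bigr => i _; rewrite mulrC. Qed.

Lemma dotDl u v w : dot (u + v) w = dot u w + dot v w.
Proof. by rewrite /dot -big_split; apply: eq_bigr => i _; rewrite !mxE mulrDl. Qed.

Lemma dotNl u w : dot (- u) w = - dot u w.
Proof. by rewrite /dot -sumrN; apply: eq_bigr => i _; rewrite !mxE mulNr. Qed.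

Lemma dotBl u v w : dot (u - v) w = dot u w - dot v w.
Proof. by rewrite dotDl dotNl. Qed.

Lemma dotZl a u w : dot (a *: u) w = a * dot u w.
Proof. by rewrite /dot mulr_sumr; apply: eq_bigr => i _; rewrite !mxE mulrA. Qed.

Lemma dotDr u v w : dot w (u + v) = dot w u + dot w v.
Proof. by rewrite dotC dotDl !(dotC w). Qed.
Lemma dotBr u v w : dot w (u - v) = dot w u - dot w v.
Proof. by rewrite dotC dotBl !(dotC w). Qed.
Lemma dotZr a u w : dot w (a *: u) = a * dot w u.
Proof. by rewrite dotC dotZl dotC. Qed.

Lemma dot_sumr (I : finType) (P : pred I) (F : I -> 'cV[R]_d) w :
  dot w (\sum_(j | P j) F j) = \sum_(j | P j) dot w (F j).
Proof.
elim/big_rec2: _ => [|j y x Pj <-]; last by rewrite dotDr.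
by rewrite /dot big1 // => i _; rewrite mxE mulr0.
Qed.

Lemma dot_suml (I : finType) (P : pred I) (F : I -> 'cV[R]_d) w :
  dot (\sum_(j | P j) F j) w = \sum_(j | P j) dot (F j) w.
Proof. by rewrite dotC dot_sumr; apply: eq_bigr => j _; apply: dotC. Qed.

Lemma dot_ge0 u : 0 <= dot u u.
Proof. by apply: sumr_ge0 => i _; rewrite -expr2 sqr_ge0. Qed.

Lemma vnormE u : vnorm u = Num.sqrt (dot u u).
Proof. by rewrite /vnorm /dot; congr Num.sqrt; apply: eq_bigr => i _; rewrite expr2. Qed.

Lemma vnorm_ge0 u : 0 <= vnorm u.
Proof. by rewrite vnormE sqrtr_ge0. Qed.

Lemma vnorm_sq u : vnorm u ^+ 2 = dot u u.
Proof. by rewrite vnormE sqr_sqrtr // dot_ge0. Qed.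

Lemma unit_dot u : vnorm u = 1 -> dot u u = 1.
Proof. by move=> h; rewrite -vnorm_sq h expr1n. Qed.

Lemma dot_le_vnorm e x : vnorm e = 1 -> dot e x <= vnorm x.
Proof.
move=> /unit_dot he.
have h := dot_ge0 (x - dot e x *: e).
rewrite dotBl !dotBr !dotZl !dotZr he (dotC x e) in h.
have h2 : dot e x ^+ 2 <= dot x x by lra.
rewrite vnormE (le_trans (ler_norm _)) //.
by rewrite -sqrtr_sqr ler_sqrt // dot_ge0.
Qed.

Lemma dot_sq_le e x : vnorm e = 1 -> dot e x ^+ 2 <= dot x x.
Proof.
move=> /unit_dot he.
have h := dot_ge0 (x - dot e x *: e).
rewrite dotBl !dotBr !dotZl !dotZr he (dotC x e) in h; lra.
Qed.

Lemma dist_sq u v : dot (u - v) (u - v) = dot u u - 2 * dot u v + dot v v.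
Proof. rewrite dotBl !dotBr (dotC v u); ring. Qed.

End Generic.
Section Sets.
Variable R : realType.
Variables d K : nat.
Hypothesis K2 : (2 <= K)%N.
Implicit Types W : 'M[R]_(d, K).

Lemma sum_ind (V : lmodType R) (P : pred 'I_K) (j : 'I_K) (F : 'I_K -> V) :
  P j -> \sum_(i | P i) ((i == j)%:R : R) *: F i = F j.
Proof.
move=> Pj; rewrite (bigD1 j) //= eqxx scale1r big1 ?addr0 // => i /andP[_ /negbTE ->].
by rewrite scale0r.
Qed.

Lemma sum_ind1 (P : pred 'I_K) (j : 'I_K) :
  P j -> \sum_(i | P i) ((i == j)%:R : R) = 1.
Proof.
move=> Pj; rewrite (bigD1 j) //= eqxx big1 ?addr0 // => i /andP[_ /negbTE ->] //.
Qed.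

Lemma conv_two W k (p q : 'I_K) (t : R) :
  p != k -> q != k -> 0 <= t <= 1 ->
  conv_rest W k (t *: col p W + (1 - t) *: col q W).
Proof.
move=> pk qk /andP[t0 t1].
exists (fun i => t * (i == p)%:R + (1 - t) * (i == q)%:R); split; [|split].
- by move=> j; apply: addr_ge0; apply: mulr_ge0; rewrite ?subr_ge0 // ler0n.
- rewrite big_split /= -!mulr_sumr.
  by rewrite !sum_ind1 // !mulr1 addrC subrK.
- rewrite (eq_bigr (fun i => t *: ((i == p)%:R *: col i W) + (1 - t) *: ((i == q)%:R *: col i W))); last first.
    by move=> i _; rewrite scalerDl !scalerA.
  by rewrite big_split /= -!scaler_sumr !sum_ind.
Qed.

Lemma conv_one W k (j : 'I_K) : j != k -> conv_rest W k (col j W).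
Proof.
move=> jk; have := @conv_two W k j j 1 jk jk.
by rewrite scale1r subrr scale0r addr0; apply; rewrite ler01 lexx.
Qed.

Lemma exists_other (k : 'I_K) : exists j : 'I_K, j != k.
Proof.
have h0 : (0 < K)%N by apply: leq_trans K2.
case: (eqVneq (val k) 0%N) => hk.
- by exists (Ordinal K2); apply/negP => /eqP h; move: hk; rewrite -h.
- by exists (Ordinal h0); apply/negP => /eqP h; move: hk; rewrite -h.
Qed.

Lemma conv_nonempty W k : exists v, conv_rest W k v.
Proof. by have [j jk] := exists_other k; exists (col j W); apply: conv_one. Qed.


Lemma dist_rest_le W k v : conv_rest W k v -> dist_rest W k <= vnorm (col k W - v).
Proof.
move=> hv; rewrite /dist_rest.
have := @ge_inf R [set vnorm (col k W - w) | w in conv_rest W k].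
apply.
  by exists 0 => x [w _ <-]; apply: vnorm_ge0.
by exists v.
Qed.

Lemma dist_rest_ge W k c :
  (forall v, conv_rest W k v -> c <= vnorm (col k W - v)) -> c <= dist_rest W k.
Proof.
move=> h; rewrite /dist_rest; apply: lb_le_inf.
  by have [v hv] := conv_nonempty W k; exists (vnorm (col k W - v)), v.
by move=> x [w hw <-]; apply: h.
Qed.

Lemma dist_rest_ge0 W k : 0 <= dist_rest W k.
Proof. by apply: dist_rest_ge => v _; apply: vnorm_ge0. Qed.

Lemma rho_rest_le W k : rho_one_vs_rest W <= dist_rest W k.
Proof.
rewrite /rho_one_vs_rest; apply: (@ge_inf R [set dist_rest W k | k in [set: 'I_K]]).
  by exists 0 => x [j _ <-]; apply: dist_rest_ge0.
by exists k.
Qed.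

Lemma rho_rest_ge W c : (forall k, c <= dist_rest W k) -> c <= rho_one_vs_rest W.
Proof.
move=> h; rewrite /rho_one_vs_rest; apply: lb_le_inf.
  by exists (dist_rest W (Ordinal K2)), (Ordinal K2).
by move=> x [j _ <-]; apply: h.
Qed.

Lemma rho_one_le W (k k' : 'I_K) : k' != k -> rho_one_vs_one W <= vnorm (col k W - col k' W).
Proof.
move=> kk; rewrite /rho_one_vs_one; apply: ge_inf.
  by exists 0 => x [j [j' [_ ->]]]; apply: vnorm_ge0.
by exists k, k'.
Qed.

Lemma rho_one_ge W c :
  (forall k k' : 'I_K, k' != k -> c <= vnorm (col k W - col k' W)) -> c <= rho_one_vs_one W.
Proof.
move=> h; rewrite /rho_one_vs_one; apply: lb_le_inf.
  have [j jk] := exists_other (Ordinal K2).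
  by exists (vnorm (col (Ordinal K2) W - col j W)), (Ordinal K2), j.
by move=> x [j [j' [jj ->]]]; apply: h.
Qed.

End Sets.
Section Abstract.
Variable R : realType.
Variables d K : nat.
Hypothesis K2 : (2 <= K)%N.
Implicit Types W : 'M[R]_(d, K).

Definition Mc W (c : R) := forall k k' : 'I_K, k' != k -> dot (col k W) (col k' W) <= c.

Lemma vnormB_unit (u v : 'cV[R]_d) : vnorm u = 1 -> vnorm v = 1 ->
  vnorm (u - v) = Num.sqrt (2 - 2 * dot u v).
Proof.
by move=> /unit_dot hu /unit_dot hv; rewrite vnormE dist_sq hu hv; congr Num.sqrt; lra.
Qed.

Lemma G1 W c : OB W -> Mc W c -> 1 - c <= rho_one_vs_rest W.
Proof.
move=> hW hM; apply: rho_rest_ge => // k; apply: dist_rest_ge => // v [lam [l0 [l1 ->]]].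
apply: le_trans (dot_le_vnorm _ (hW k)).
rewrite dotBr unit_dot // dot_sumr.
have : \sum_(j < K | j != k) dot (col k W) (lam j *: col j W) <= \sum_(j < K | j != k) lam j * c.
  by apply: ler_sum => j jk; rewrite dotZr ler_wpM2l // hM.
by rewrite -mulr_suml l1 mul1r; lra.
Qed.

Lemma G2 W c : OB W -> (Num.sqrt (2 - 2 * c) <= rho_one_vs_one W <-> Mc W c).
Proof.
move=> hW; have hd : forall k k' : 'I_K, 0 <= 2 - 2 * dot (col k W) (col k' W).
  move=> k k'; have := dot_ge0 (col k W - col k' W).
  by rewrite dist_sq !unit_dot //; lra.
split.
- move=> h k k' kk; have := le_trans h (rho_one_le W kk).
  by rewrite vnormB_unit // ler_sqrt //; lra.
- move=> hM; apply: rho_one_ge => // k k' kk.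
  by rewrite vnormB_unit // ler_sqrt //; have := hM k k' kk; lra.
Qed.

Lemma abstract_main (c : R) :
  (forall W, OB W -> exists k k' : 'I_K, k' != k /\ c <= dot (col k W) (col k' W)) ->
  (exists W0, OB W0 /\ Mc W0 c) ->
  (forall W, OB W -> rho_one_vs_rest W <= 1 - c) ->
  (forall W, OB W -> 1 - c <= rho_one_vs_rest W -> Mc W c) ->
  forall W, is_argmax_OB (@rho_one_vs_rest R d K) W <-> is_argmax_OB (@rho_one_vs_one R d K) W.
Proof.
move=> HA [W0 [OB0 M0]] HC1 HC2.
have G3 W : OB W -> rho_one_vs_one W <= Num.sqrt (2 - 2 * c).
  move=> hW; have [k [k' [kk hc]]] := HA W hW.
  have := dot_le_vnorm (col k' W) (hW k); rewrite (hW k') => h1.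
  by apply: le_trans (rho_one_le W kk) _; rewrite vnormB_unit // ler_sqrt; lra.
have E1 W : is_argmax_OB (@rho_one_vs_rest R d K) W <-> OB W /\ Mc W c.
  split.
  - move=> [hW hmax]; split => //; apply: HC2 => //.
    by apply: le_trans (hmax _ OB0); apply: G1.
  - move=> [hW hM]; split => // W' hW'.
    by apply: le_trans (HC1 _ hW') (G1 hW hM).
have E2 W : is_argmax_OB (@rho_one_vs_one R d K) W <-> OB W /\ Mc W c.
  split.
  - move=> [hW hmax]; split => //; apply/(G2 _ hW).
    by apply: le_trans (hmax _ OB0); apply/G2.
  - move=> [hW hM]; split => // W' hW'.
    by apply: le_trans (G3 _ hW') _; apply/G2.
by move=> W; rewrite E1 E2.
Qed.

End Abstract.
Lemma real_deriv_lemma (R : realType) (A B N : R) : 0 <= N ->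
  (forall t, 0 <= t <= 1 -> A <= A - 2 * t * B + t ^+ 2 * N) -> B <= 0.
Proof.
move=> N0 h; rewrite leNgt; apply/negP => B0.
case: (lerP N B) => NB.
- by have := h 1; rewrite ler01 lexx /= expr1n; move/(_ isT); lra.
- have N0' : 0 < N by lra.
  have ht : 0 <= B / N <= 1.
    by apply/andP; split; [rewrite divr_ge0 ?ltW | rewrite ler_pdivrMr // mul1r ltW].
  have := h (B / N) ht; rewrite expr2 -!mulrA mulVf ?gt_eqF // mulr1.
  have : 0 < B * (B / N) by rewrite mulr_gt0 // divr_gt0.
  lra.
Qed.

Section Simplex.
Variable R : realType.
Variables d K : nat.
Hypothesis K2 : (2 <= K)%N.
Implicit Types W : 'M[R]_(d, K).

Let b : R := (K%:R - 1)^-1.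
Lemma Kgt1 : 1 < (K%:R : R).
Proof. by rewrite (@ltr_nat R 1 K). Qed.
Lemma b_gt0 : 0 < b.
Proof. by rewrite invr_gt0 subr_gt0 Kgt1. Qed.
Lemma bK : (K%:R - 1) * b = 1.
Proof. by rewrite mulfV // gt_eqF // subr_gt0 Kgt1. Qed.

Lemma sum_rest (V : zmodType) (F : 'I_K -> V) k :
  \sum_(j | j != k) F j = \sum_j F j - F k.
Proof. by rewrite [X in _ = X - _](bigD1 k) //= addrAC subrr add0r. Qed.

Lemma sum_const_rest k (x : R) : \sum_(j < K | j != k) x = (K%:R - 1) * x.
Proof.
by rewrite sum_rest sumr_const card_ord mulrBl mul1r mulr_natl.
Qed.

Lemma conv_mix W k v u t : conv_rest W k v -> conv_rest W k u -> 0 <= t <= 1 ->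
  conv_rest W k ((1 - t) *: v + t *: u).
Proof.
move=> [l1 [l10 [l11 ->]]] [l2 [l20 [l21 ->]]] /andP[t0 t1].
exists (fun j => (1 - t) * l1 j + t * l2 j); split; [|split].
- by move=> j; apply: addr_ge0; apply: mulr_ge0; rewrite ?subr_ge0.
- by rewrite big_split /= -!mulr_sumr l11 l21 !mulr1 subrK.
- rewrite !scaler_sumr -big_split /=; apply: eq_bigr => j _.
  rewrite scalerDl !scalerA -!scalerDl; congr (_ *: _); ring.
Qed.

Definition ssum W : 'cV[R]_d := \sum_j col j W.
Definition cen W k : 'cV[R]_d := b *: (ssum W - col k W).

Lemma cen_conv W k : conv_rest W k (cen W k).
Proof.
exists (fun _ => b); split; [|split].
- by move=> _; apply: ltW b_gt0.
- by rewrite sum_const_rest bK.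
- by rewrite -scaler_sumr sum_rest.
Qed.

Lemma dot_ssum W k : OB W ->
  dot (col k W) (ssum W) = 1 + \sum_(j | j != k) dot (col k W) (col j W).
Proof. by move=> hW; rewrite /ssum dot_sumr (bigD1 k) //= unit_dot. Qed.

Lemma sum_dot_ssum W : \sum_k dot (col k W) (ssum W) = dot (ssum W) (ssum W).
Proof.
by rewrite /ssum [in RHS]dot_suml.
Qed.

Lemma simplex_HA W : OB W ->
  exists k k' : 'I_K, k' != k /\ - b <= dot (col k W) (col k' W).
Proof.
move=> hW.
case: (boolP [exists k : 'I_K, exists k' : 'I_K, (k' != k) && (- b <= dot (col k W) (col k' W))]).
  by move=> /existsP[k /existsP[k' /andP[h1 h2]]]; exists k, k'.
rewrite negb_exists => /forallP H.
have Hlt : forall k k' : 'I_K, k' != k -> dot (col k W) (col k' W) < - b.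
  move=> k k' kk; have := H k; rewrite negb_exists => /forallP /(_ k').
  by rewrite kk /= -ltNge.
have k0 : 'I_K := Ordinal K2.
have S1 : \sum_k \sum_(j | j != k) dot (col k W) (col j W) < \sum_(k < K) \sum_(j < K | j != k) (- b).
  apply: ltr_sum; first by apply/hasP; exists k0; rewrite ?mem_index_enum.
  move=> k _; have [j jk] := exists_other K2 k.
  by apply: ltr_sum; [apply/hasP; exists j; rewrite ?mem_index_enum | move=> i; apply: Hlt].
have S2 : \sum_k \sum_(j | j != k) dot (col k W) (col j W) = dot (ssum W) (ssum W) - K%:R.
  rewrite -sum_dot_ssum (eq_bigr (fun k => dot (col k W) (ssum W) - 1)).
    by rewrite sumrB sumr_const card_ord.
  by move=> k _; rewrite dot_ssum //; ring.
have S3 : \sum_(k < K) \sum_(j < K | j != k) (- b) = - K%:R.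
  rewrite (eq_bigr (fun _ => -1)); first by rewrite sumr_const card_ord mulNrn.
  by move=> k _; rewrite sum_const_rest mulrN bK.
have := dot_ge0 (ssum W); lra.
Qed.

Lemma cen_norm_sum W : OB W ->
  \sum_k dot (col k W - cen W k) (col k W - cen W k)
  = K%:R * (1 + b) ^+ 2 - K%:R * b ^+ 2 * dot (ssum W) (ssum W).
Proof.
move=> hW.
set S := dot (ssum W) (ssum W).
have e : forall k, col k W - cen W k = (1 + b) *: col k W - b *: ssum W.
  by move=> k; rewrite /cen scalerBr scalerDl scale1r opprB addrA addrAC.
rewrite (eq_bigr (fun k => (1 + b) ^+ 2 - 2 * (1 + b) * b * dot (col k W) (ssum W) + b ^+ 2 * S)).
  have s1 : \sum_(i < K) (1 + b) ^+ 2 = K%:R * (1 + b) ^+ 2.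
    by rewrite sumr_const card_ord mulr_natl.
  have s2 : \sum_(i < K) 2 * (1 + b) * b * dot (col i W) (ssum W) = 2 * (1 + b) * b * S.
    by rewrite -mulr_sumr sum_dot_ssum.
  have s3 : \sum_(i < K) b ^+ 2 * S = K%:R * (b ^+ 2 * S).
    by rewrite sumr_const card_ord mulr_natl.
  rewrite big_split /= sumrB s1 s2 s3.
  have hK : (K%:R : R) = b^-1 + 1 by rewrite invrK; ring.
  by rewrite hK; field; rewrite gt_eqF // b_gt0.
move=> k _; rewrite e dist_sq !dotZl !dotZr unit_dot // -/S; ring.
Qed.

Lemma cenE W k : col k W - cen W k = (1 + b) *: col k W - b *: ssum W.
Proof. by rewrite /cen scalerBr scalerDl scale1r opprB addrA addrAC. Qed.

Lemma simplex_HC1 W : OB W -> rho_one_vs_rest W <= 1 - - b.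
Proof.
move=> hW; rewrite opprK leNgt; apply/negP => hlt.
have h : forall k, (1 + b) ^+ 2 < dot (col k W - cen W k) (col k W - cen W k).
  move=> k; have h1 := le_trans (rho_rest_le K2 W k) (dist_rest_le (cen_conv W k)).
  rewrite -vnorm_sq; have h0 : 0 <= 1 + b by have := b_gt0; lra.
  have h2 : 1 + b < vnorm (col k W - cen W k) by lra.
  by rewrite ltr_pXn2r // ?nnegrE //; apply: le_trans (vnorm_ge0 _) ; lra.
have : \sum_(k < K) (1 + b) ^+ 2 < \sum_k dot (col k W - cen W k) (col k W - cen W k).
  by apply: ltr_sum => // ; apply/hasP; exists (Ordinal K2); rewrite ?mem_index_enum.
rewrite cen_norm_sum // sumr_const card_ord -mulr_natl.
have : 0 <= (K%:R : R) * b ^+ 2 * dot (ssum W) (ssum W).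
  by rewrite mulr_ge0 ?dot_ge0 // mulr_ge0 ?sqr_ge0 // ler0n.
lra.
Qed.


Lemma simplex_HC2 W : OB W -> 1 - - b <= rho_one_vs_rest W -> Mc W (- b).
Proof.
move=> hW; rewrite opprK => hge.
have hv : forall k v, conv_rest W k v -> 1 + b <= vnorm (col k W - v).
  by move=> k v cv; apply: le_trans hge (le_trans (rho_rest_le K2 W k) (dist_rest_le cv)).
have h0 : 0 <= 1 + b by have := b_gt0; lra.
set S := dot (ssum W) (ssum W).
have hS : S = 0.
  have h : forall k, (1 + b) ^+ 2 <= dot (col k W - cen W k) (col k W - cen W k).
    move=> k; rewrite -vnorm_sq ler_pXn2r ?nnegrE ?vnorm_ge0 //.
    exact: hv (cen_conv W k).
  have : \sum_(k < K) (1 + b) ^+ 2 <= \sum_k dot (col k W - cen W k) (col k W - cen W k).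
    by apply: ler_sum.
  rewrite cen_norm_sum // sumr_const card_ord -mulr_natl -/S => h2.
  have hp : 0 < (K%:R : R) * b ^+ 2.
    by rewrite mulr_gt0 ?exprn_gt0 ?b_gt0 // ltr0n; apply: leq_trans K2.
  have hS0 := dot_ge0 (ssum W).
  rewrite -/S in hS0.
  have : (K%:R : R) * b ^+ 2 * S <= 0 by lra.
  by rewrite pmulr_rle0 // => hS1; apply/eqP; rewrite eq_le hS1 hS0.
have hws : forall k, dot (col k W) (ssum W) = 0.
  move=> k; have := dot_sq_le (ssum W) (hW k); rewrite -/S hS.
  by move=> h; apply/eqP; rewrite -sqrf_eq0 eq_le h sqr_ge0.
move=> k j jk.
set x := col k W - cen W k.
set y := col j W - cen W k.
have hp : forall t, 0 <= t <= 1 -> (1 + b) ^+ 2 <= dot x x - 2 * t * dot x y + t ^+ 2 * dot y y.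
  move=> t ht.
  have cv := conv_mix (cen_conv W k) (conv_one W jk) ht.
  have := hv _ _ cv.
  have -> : col k W - ((1 - t) *: cen W k + t *: col j W) = x - t *: y.
    by rewrite /x /y; apply/matrixP => i l; rewrite !mxE; ring.
  move=> h; have := h; rewrite -(ler_pXn2r (n := 2)) ?nnegrE ?vnorm_ge0 //.
  by rewrite vnorm_sq dist_sq !dotZr !dotZl; lra.
have hxx : dot x x = (1 + b) ^+ 2.
  by rewrite /x cenE dist_sq !dotZl !dotZr (unit_dot (hW k)) ?(dotC (ssum W) (col k W)) hws -/S hS; ring.
rewrite hxx in hp.
have hB := real_deriv_lemma (dot_ge0 y) hp.
have hxy : dot x y = (1 + b) * (dot (col k W) (col j W) + b).
  rewrite /x /y cenE /cen !(dotBl, dotBr, dotZl, dotZr) (unit_dot (hW k)).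
  rewrite ?(dotC (ssum W) (col j W)) ?(dotC (ssum W) (col k W)) !hws -/S hS; ring.
rewrite hxy in hB.
have hb := b_gt0.
have : dot (col k W) (col j W) + b <= 0.
  by move: hB; rewrite pmulr_rle0 //; lra.
lra.
Qed.
End Simplex.

Section SimplexExists.
Variable R : realType.

Lemma sum_delta (n k : nat) (F : nat -> R) : (k < n)%N ->
  \sum_(i < n) ((i == k :> nat)%:R * F i) = F k.
Proof.
move=> hk; rewrite (bigD1 (Ordinal hk)) //= eqxx mul1r big1 ?addr0 // => i hi.
have : (val i == k) = false.
  by apply/negbTE; apply: contra hi => /eqP hik; apply/eqP; apply: val_inj.
by move=> ->; rewrite mul0r.
Qed.

Lemma sum_widen (n d : nat) (F : nat -> R) : (n <= d)%N ->
  \sum_(i < d) (if (i < n)%N then F i else 0) = \sum_(i < n) F i.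
Proof. by move=> hnd; rewrite (big_ord_widen d F hnd) [RHS]big_mkcond. Qed.

Lemma simplex_exists (d n : nat) : (1 <= n)%N -> (n <= d)%N ->
  exists W0 : 'M[R]_(d, n.+1), OB W0 /\
    forall k k' : 'I_n.+1, k' != k -> dot (col k W0) (col k' W0) <= - (n%:R)^-1.
Proof.
move=> n1 nd.
set N : R := n%:R.
have N0 : 0 < N by rewrite ltr0n.
set r : R := (Num.sqrt N)^-1.
set p : R := Num.sqrt ((N + 1) / N).
set q : R := - (r + p) / N.
have hr2 : r ^+ 2 = N^-1 by rewrite /r exprVn sqr_sqrtr // ltW.
have hp2 : p ^+ 2 = (N + 1) / N by rewrite /p sqr_sqrtr // divr_ge0 // ltW // ?addr_gt0.
pose e (k : nat) (i : nat) : R := if (k < n)%N then p * (i == k)%:R + q else r.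
pose W0 : 'M[R]_(d, n.+1) := \matrix_(i, k) (if (i < n)%N then e k i else 0).
have hdot : forall k j : 'I_n.+1, dot (col k W0) (col j W0) = \sum_(i < n) e k i * e j i.
  move=> k j; rewrite /dot -(sum_widen (fun i => e k i * e j i) nd).
  by apply: eq_bigr => i _; rewrite !mxE; case: ifP => _; rewrite ?mul0r.
have hsumq : forall j : nat, (j < n)%N -> \sum_(i < n) (p * (i == j :> nat)%:R + q) = p + N * q.
  move=> j hj; rewrite big_split /= sumr_const card_ord -mulr_natl.
  rewrite (eq_bigr (fun i : 'I_n => (i == j :> nat)%:R * p)); last by move=> i _; rewrite mulrC.
  by rewrite (sum_delta (fun _ => p)).
have hdot2 : forall k j : 'I_n.+1, dot (col k W0) (col j W0) =
   if (k < n)%N then (if (j < n)%N then p * (p * (k == j :> nat)%:R + q) + q * (p + N * q) else r * (p + N * q))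
   else (if (j < n)%N then r * (p + N * q) else N * r ^+ 2).
  move=> k j; rewrite hdot /e.
  case: (ltnP k n) => hk; case: (ltnP j n) => hj.
  - rewrite (eq_bigr (fun i : 'I_n => (i == k :> nat)%:R * (p * (p * (i == j :> nat)%:R + q)) + q * (p * (i == j :> nat)%:R + q))); last first.
      by move=> i _; ring.
    rewrite big_split /= (sum_delta (fun i => p * (p * (i == j :> nat)%:R + q))) // -mulr_sumr hsumq //.
  - by rewrite -mulr_suml hsumq // mulrC.
  - by rewrite -mulr_sumr hsumq.
  - by rewrite sumr_const card_ord -mulr_natl expr2.
have key1 : p * (p + q) + q * (p + N * q) = 1.
  have -> : p * (p + q) + q * (p + N * q) = p ^+ 2 + (r ^+ 2 - p ^+ 2) / N.
    by rewrite /q; field; rewrite gt_eqF.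
  by rewrite hp2 hr2; field; rewrite gt_eqF.
have key2 : p * (0 + q) + q * (p + N * q) = - N^-1.
  have -> : p * (0 + q) + q * (p + N * q) = (r ^+ 2 - p ^+ 2) / N.
    by rewrite /q; field; rewrite gt_eqF.
  by rewrite hp2 hr2; field; rewrite gt_eqF.
have key3 : r * (p + N * q) = - N^-1.
  have -> : r * (p + N * q) = - r ^+ 2 by rewrite /q; field; rewrite gt_eqF.
  by rewrite hr2.
have key4 : N * r ^+ 2 = 1 by rewrite hr2 mulfV // gt_eqF.
exists W0; split.
- move=> k; rewrite vnormE hdot2 eqxx mulr1.
  case: ifP => hk; first by rewrite hk key1 sqrtr1.
  by rewrite hk key4 sqrtr1.
- move=> k j jk; rewrite hdot2.
  have hkj : (k == j :> nat) = false by apply/negbTE; apply: contra jk => /eqP h; apply/eqP/val_inj.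
  rewrite hkj mulr0.
  case: ifP => hk'; case: ifP => hj'; rewrite ?key2 ?key3 //.
  exfalso; move: hkj; have hk1 := ltn_ord k; have hj1 := ltn_ord j.
  have -> : val k = n by apply/eqP; rewrite eqn_leq -ltnS hk1 leqNgt hk'.
  have -> : val j = n by apply/eqP; rewrite eqn_leq -ltnS hj1 leqNgt hj'.
  by rewrite eqxx.
Qed.

End SimplexExists.

Lemma case_simplex (R : realType) (d K : nat) : (2 <= K)%N -> (K <= d.+1)%N ->
  forall W : 'M[R]_(d, K),
    is_argmax_OB (@rho_one_vs_rest R d K) W <-> is_argmax_OB (@rho_one_vs_one R d K) W.
Proof.
move=> K2 Kd.
apply: (abstract_main K2 (c := - (K%:R - 1)^-1)).
- by move=> W hW; apply: simplex_HA.
- case: K K2 Kd => [//|n] K2 Kd.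
  have [W0 [h1 h2]] := @simplex_exists R d n K2 Kd.
  exists W0; split => // k k' kk.
  by rewrite -natr1 addrK; apply: h2.
- by move=> W hW; apply: simplex_HC1.
- by move=> W hW; apply: simplex_HC2.
Qed.


Section Trig.
Variable R : realType.
Implicit Types x y z a b : R.

Lemma in_0pi x : (x \in `[0, pi]) = (0 <= x <= pi).
Proof. by rewrite in_itv. Qed.

Lemma cos_le_mono x y : 0 <= x -> x <= y -> y <= pi -> cos y <= cos x.
Proof.
move=> x0 xy ypi.
have hx : 0 <= x <= pi by apply/andP; split => //; apply: le_trans ypi.
have hy : 0 <= y <= pi by apply/andP; split => //; apply: le_trans xy.
by rewrite leNgt ltr_cos ?in_0pi // -leNgt.
Qed.

Lemma cos_lt_mono x y : 0 <= x -> x < y -> y <= pi -> cos y < cos x.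
Proof.
move=> x0 xy ypi.
have hx : 0 <= x <= pi by apply/andP; split => //; apply: le_trans (ltW xy) ypi.
have hy : 0 <= y <= pi by apply/andP; split => //; apply: le_trans (ltW xy).
by rewrite ltr_cos ?in_0pi.
Qed.

Lemma cos_half z : cos z = 1 - 2 * sin (z / 2) ^+ 2.
Proof.
have -> : z = z / 2 + z / 2 by rewrite -splitr.
rewrite cosD -!expr2 cos2sin2 -splitr; ring.
Qed.

Lemma prod_sin x y : 2 * sin x * sin y = cos (x - y) - cos (x + y).
Proof. rewrite cosB cosD; ring. Qed.

Lemma sin_eq0_small z : - (pi / 2) <= z <= pi / 2 -> sin z = 0 -> z = 0.
Proof.
move=> hz h; have p0 := @pi_gt0 R.
apply: sin_inj; rewrite ?in_itv //= ?h ?sin0 //.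
by apply/andP; split; lra.
Qed.

Lemma cos2pi_n x (n : nat) : cos (x + (pi *+ 2) *+ n) = cos x.
Proof. exact: (periodicn (@cosD2pi R)). Qed.
Lemma sin2pi_n x (n : nat) : sin (x + (pi *+ 2) *+ n) = sin x.
Proof. exact: (periodicn (@sinD2pi R)). Qed.

Lemma cos_2pi_minus x : cos (pi *+ 2 - x) = cos x.
Proof. by rewrite addrC -[pi *+ 2]mulr1n cos2pi_n cosN. Qed.

Lemma cos_mult (K m : nat) : (1 <= m)%N -> (m < K)%N ->
  cos (m%:R * ((pi : R) *+ 2 / K%:R)) <= cos ((pi : R) *+ 2 / K%:R).
Proof.
move=> m1 mK.
have K0 : (0 : R) < K%:R by rewrite ltr0n; apply: leq_trans mK.
have pi0 := @pi_gt0 R.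
set tau : R := pi *+ 2 / K%:R.
have a0 : 0 < tau by rewrite divr_gt0 // mulrn_wgt0.
have hKt : K%:R * tau = pi *+ 2 by rewrite /tau mulrC mulfVK // gt_eqF.
wlog hm : m m1 mK / (m.*2 <= K)%N.
  move=> hw; case: (leqP m.*2 K) => hmk; first exact: hw.
  have -> : m%:R * tau = pi *+ 2 - (K - m)%:R * tau.
    by rewrite natrB ?(ltnW mK) // -hKt; ring.
  rewrite cos_2pi_minus; apply: hw.
  - by rewrite subn_gt0.
  - by rewrite ltn_subrL m1 (leq_trans _ mK).
  - move: hmk; rewrite -!muln2 => hmk; lia.
apply: cos_le_mono; first exact: ltW.
- rewrite -[X in X <= _]mul1r; apply: ler_wpM2r; first exact: ltW.
  by rewrite ler1n.
- have h2 : (m%:R : R) * 2 <= K%:R by rewrite -natrM ler_nat muln2.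
  have -> : m%:R * tau = (m%:R * 2) * pi / K%:R by rewrite /tau; ring.
  rewrite ler_pdivrMr //; rewrite [pi * _]mulrC; apply: ler_wpM2r => //; exact: ltW.
Qed.

End Trig.


Lemma angle_exists (R : realType) (x y : R) : x ^+ 2 + y ^+ 2 = 1 ->
  exists th : R, [/\ 0 <= th, th < pi *+ 2, cos th = x & sin th = y].
Proof.
move=> h.
have hx : -1 <= x <= 1.
  have hy2 := sqr_ge0 y.
  by apply/andP; split; nra.
have pi0 := @pi_gt0 R.
have hsy : Num.sqrt (1 - x ^+ 2) = `|y|.
  by rewrite -sqrtr_sqr; congr Num.sqrt; lra.
case: (lerP 0 y) => hy.
- exists (acos x); split.
  + exact: acos_ge0.
  + by apply: le_lt_trans (acos_lepi hx) _; rewrite mulr2n; lra.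
  + exact: acosK.
  + by rewrite sin_acos // hsy ger0_norm.
- have hx1 : x < 1.
    rewrite lt_neqAle; case/andP: hx => _ ->; rewrite andbT.
    apply/eqP => hx1; move: h; rewrite hx1 expr1n => h.
    have : y ^+ 2 = 0 by lra.
    by move/eqP; rewrite sqrf_eq0 => /eqP y0; lra.
  have ha0 : 0 < acos x by apply: acos_gt0; case/andP: hx => -> _.
  exists (pi *+ 2 - acos x); split.
  + have := acos_lepi hx; rewrite mulr2n; lra.
  + lra.
  + by rewrite cos_2pi_minus acosK.
  + rewrite addrC -[pi *+ 2]mulr1n sin2pi_n sinN sin_acos // hsy ltr0_norm //; lra.
Qed.


Section Geom.
Variable R : realType.
Implicit Types a b : R.

Lemma pos_real a b : 0 <= a -> 0 <= b -> 0 < a + b -> a + b <= pi ->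
  exists t : R, 0 <= t <= 1 /\
   2 * (1 - cos a) - 2 * t * ((1 - cos a) + (1 - cos (a + b)) - (1 - cos b))
     + 2 * t ^+ 2 * (1 - cos (a + b)) = (1 - cos a) * (1 - cos b).
Proof.
move=> a0 b0 ab0 abpi.
have hC : cos (a + b) < 1 by rewrite -cos0; apply: cos_lt_mono.
have hB : cos (a + b) <= cos b by apply: cos_le_mono => //; lra.
have hA : cos (a + b) <= cos a by apply: cos_le_mono => //; lra.
have cA := cos_le1 a; have cB := cos_le1 b.
set A := 1 - cos a; set B := 1 - cos b; set C := 1 - cos (a + b).
have C0 : 0 < C by rewrite /C; lra.
exists ((A + C - B) / (2 * C)); split.
  apply/andP; split.
    by apply: divr_ge0; rewrite /A /B /C; lra.
  by rewrite ler_pdivrMr ?mulr_gt0 // mul1r /A /B /C; lra.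
have gram : 4 * A * C - (A + C - B) ^+ 2 = 2 * A * B * C.
  have e : 4 * A * C - (A + C - B) ^+ 2 - 2 * A * B * C
     = (1 - cos a ^+ 2) * (1 - cos b ^+ 2) - (sin a * sin b) ^+ 2.
    by rewrite /A /B /C cosD; ring.
  have : (1 - cos a ^+ 2) * (1 - cos b ^+ 2) - (sin a * sin b) ^+ 2 = 0.
    by rewrite -!sin2cos2; ring.
  by rewrite -e; lra.
have -> : 2 * A - 2 * ((A + C - B) / (2 * C)) * (A + C - B) + 2 * ((A + C - B) / (2 * C)) ^+ 2 * C
   = (4 * A * C - (A + C - B) ^+ 2) / (2 * C).
  by field; rewrite gt_eqF.
by rewrite gram; field; rewrite gt_eqF.
Qed.

Lemma comb_expand d (u P Q : 'cV[R]_d) t : vnorm u = 1 -> vnorm P = 1 -> vnorm Q = 1 ->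
  dot (u - (t *: Q + (1 - t) *: P)) (u - (t *: Q + (1 - t) *: P)) =
  2 * (1 - dot u P) - 2 * t * ((1 - dot u P) + (1 - dot P Q) - (1 - dot u Q))
     + 2 * t ^+ 2 * (1 - dot P Q).
Proof.
move=> hu hP hQ.
rewrite dist_sq !(dotDl, dotDr, dotZl, dotZr) (unit_dot hu) (unit_dot hP) (unit_dot hQ).
rewrite ?(dotC Q u) ?(dotC P u) ?(dotC Q P); ring.
Qed.

Lemma h_sq a b : (1 - cos a) * (1 - cos b) = (2 * sin (a / 2) * sin (b / 2)) ^+ 2.
Proof. by rewrite (cos_half a) (cos_half b); ring. Qed.

Lemma h_eq a b : 2 * sin (a / 2) * sin (b / 2) = (1 - cos ((a + b) / 2)) - 2 * sin ((a - b) / 4) ^+ 2.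
Proof.
rewrite prod_sin (cos_half (a / 2 - b / 2)).
have -> : (a / 2 - b / 2) / 2 = (a - b) / 4 by field.
have -> : a / 2 + b / 2 = (a + b) / 2 by field.
ring.
Qed.

Lemma h_ge0 a b : 0 <= a -> a <= pi *+ 2 -> 0 <= b -> b <= pi *+ 2 ->
  0 <= 2 * sin (a / 2) * sin (b / 2).
Proof.
move=> a0 a1 b0 b1; have p0 := @pi_gt0 R.
rewrite -mulrA mulr_ge0 // mulr_ge0 //; apply: sin_ge0_pi; apply/andP; split;
  rewrite ?divr_ge0 // ?ler_pdivrMr //; move: a1 b1; rewrite mulr2n; lra.
Qed.

End Geom.


Section Avg.
Variable R : realType.

Lemma avg_exists (n : nat) (F : nat -> R) (S : R) : (0 < n)%N ->
  \sum_(i < n) F i <= S -> exists i, (i < n)%N /\ F i <= S / n%:R.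
Proof.
move=> n0 hS.
case: (boolP [exists i : 'I_n, F i <= S / n%:R]).
  by move=> /existsP[i hi]; exists i.
rewrite negb_exists => /forallP H.
have : \sum_(i < n) S / n%:R < \sum_(i < n) F i.
  apply: ltr_sum; first by apply/hasP; exists (Ordinal n0); rewrite ?mem_index_enum.
  by move=> i _; rewrite ltNge; apply: H.
rewrite sumr_const card_ord => h.
have e : S / n%:R *+ n = S by rewrite -mulr_natl mulrC divfK // gt_eqF // ltr0n.
rewrite e in h; lra.
Qed.

Lemma all_eq_avg (n : nat) (F : nat -> R) (c : R) :
  (forall i, (i < n)%N -> c <= F i) -> \sum_(i < n) F i = n%:R * c ->
  forall i, (i < n)%N -> F i = c.
Proof.
move=> hc hs i hi.
have h0 : \sum_(i < n) (F i - c) = 0.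
  by rewrite sumrB hs sumr_const card_ord mulr_natl subrr.
have hp : forall j : 'I_n, xpredT j -> 0 <= F j - c by move=> j _; rewrite subr_ge0 hc.
have := @psumr_eq0P R 'I_n xpredT (fun j : 'I_n => F j - c) hp h0 (Ordinal hi) isT.
by move=> /eqP; rewrite subr_eq0 => /eqP.
Qed.

End Avg.


Lemma dot2 (R : realType) (u v : 'cV[R]_2) :
  dot u v = u ord0 0 * v ord0 0 + u ord_max 0 * v ord_max 0.
Proof.
rewrite /dot (bigD1 ord0) //= (bigD1 ord_max) //= big1 ?addr0 // => i /andP[h1 h2].
by exfalso; move: h1 h2; case: i => [[|[|i]]] //= hi.
Qed.

Section Circle.
Variable R : realType.
Variable K : nat.
Hypothesis K4 : (4 <= K)%N.
Variable W : 'M[R]_(2, K).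
Variable th : 'I_K -> R.
Hypothesis th_ge0 : forall k, 0 <= th k.
Hypothesis th_lt : forall k, th k < pi *+ 2.
Hypothesis th_cos : forall k, cos (th k) = W ord0 k.
Hypothesis th_sin : forall k, sin (th k) = W ord_max k.

Lemma K2c : (2 <= K)%N. Proof. exact: leq_trans K4. Qed.
Lemma K0c : (0 < K)%N. Proof. exact: leq_trans K4. Qed.

Let k0 : 'I_K := Ordinal K0c.
Let rl := fun i j : 'I_K => th i <= th j.
Let s := sort rl (enum 'I_K).

Lemma size_s : size s = K.
Proof. by rewrite size_sort size_enum_ord. Qed.
Lemma uniq_s : uniq s.
Proof. by rewrite sort_uniq enum_uniq. Qed.
Lemma mem_s k : k \in s.
Proof. by rewrite mem_sort mem_enum. Qed.
Lemma sorted_s : sorted rl s.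
Proof. by apply: sort_sorted => i j; apply: le_total. Qed.

Lemma mono_nth i j : (i <= j)%N -> (j < K)%N -> th (nth k0 s i) <= th (nth k0 s j).
Proof.
move=> ij jK.
apply: (sorted_leq_nth (leT := rl)) => //; first by move=> a b c; apply: le_trans.
- by move=> a; apply: lexx.
- exact: sorted_s.
- by rewrite inE size_s (leq_ltn_trans ij).
- by rewrite inE size_s.
Qed.

Definition idx (i : nat) : 'I_K := nth k0 s (i %% K).
Definition T (i : nat) : R := th (idx i) + (pi *+ 2) *+ (i %/ K).

Lemma T_step i : T i <= T i.+1.
Proof.
rewrite /T /idx modnS divnS ?K0c //.
case: ifP => hd.
- rewrite /= add1n mulrS.
  have := th_lt (nth k0 s (i %% K)); have := th_ge0 (nth k0 s 0); lra.
- have hlt : ((i %% K).+1 < K)%N.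
    rewrite ltn_neqAle ltn_pmod ?K0c // andbT; apply/negP => /eqP h.
    have : (K %| i.+1)%N by rewrite (divn_eq i K) -addnS h -mulSnr dvdn_mull.
    by rewrite hd.
  rewrite /= add0n; apply: lerD => //; exact: mono_nth.
Qed.

Lemma T_mono i j : (i <= j)%N -> T i <= T j.
Proof.
move=> ij; rewrite -(subnKC ij); elim: (j - i)%N => [|n IH]; first by rewrite addn0.
by apply: le_trans IH _; rewrite addnS; apply: T_step.
Qed.

Lemma idx_K i : idx (i + K) = idx i.
Proof. by rewrite /idx modnDr. Qed.

Lemma T_K i : T (i + K) = T i + pi *+ 2.
Proof.
rewrite /T idx_K divnDr ?dvdnn // divnn K0c addn1 mulrSr addrA //.
Qed.

Lemma cosT i : cos (T i) = W ord0 (idx i).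
Proof. by rewrite /T cos2pi_n th_cos. Qed.
Lemma sinT i : sin (T i) = W ord_max (idx i).
Proof. by rewrite /T sin2pi_n th_sin. Qed.

Lemma dotT i j : dot (col (idx i) W) (col (idx j) W) = cos (T j - T i).
Proof. by rewrite dot2 !mxE cosB !cosT !sinT; ring. Qed.

Lemma idx_neq i j : (i %% K != j %% K)%N -> idx i != idx j.
Proof. by move=> h; rewrite /idx nth_uniq ?size_s ?ltn_pmod ?K0c ?uniq_s. Qed.

Lemma modS_neq i : (i.+1 %% K != i %% K)%N.
Proof.
rewrite modnS; case: ifP => h; last by apply/eqP; lia.
apply/eqP => h0.
have hi : (K %| i)%N by rewrite /dvdn -h0.
move: h; rewrite -addn1 dvdn_addr // dvdn1 => /eqP K1.
by have := K2c; rewrite K1.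
Qed.

Lemma idx_surj k : exists i, (i < K)%N /\ idx i = k.
Proof.
exists (index k s); have hi : (index k s < K)%N by rewrite -[X in (_ < X)%N]size_s index_mem mem_s.
by split => //; rewrite /idx modn_small // nth_index // mem_s.
Qed.

Definition G (i : nat) : R := T i.+1 - T i.

Lemma G_ge0 i : 0 <= G i.
Proof. by rewrite /G subr_ge0 T_step. Qed.

Lemma sumG : \sum_(q < K) G q = pi *+ 2.
Proof.
rewrite -(big_mkord xpredT) telescope_sumr // -[K]add0n T_K; ring.
Qed.

Lemma sumG1 : \sum_(q < K) G q.+1 = pi *+ 2.
Proof.
rewrite -(big_mkord xpredT (fun i => G i.+1)) (telescope_sumr_eq (fun k => T k.+1)) //.
rewrite -addn1 addnC T_K; ring.
Qed.

Lemma unitW k : vnorm (col k W) = 1.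
Proof.
have [i [_ <-]] := idx_surj k.
by rewrite vnormE dot2 !mxE -cosT -sinT -!expr2 cos2Dsin2 sqrtr1.
Qed.

Lemma pi0c : (0 : R) < pi. Proof. exact: pi_gt0. Qed.

Let tau : R := pi *+ 2 / K%:R.

Lemma KR0 : (0 : R) < K%:R. Proof. by rewrite ltr0n K0c. Qed.

Lemma tau_gt0 : 0 < tau.
Proof. by rewrite /tau divr_gt0 ?KR0 // mulrn_wgt0 // pi0c. Qed.

Lemma tau2_le_pi : tau *+ 2 <= pi.
Proof.
rewrite /tau -mulrnAl ler_pdivrMr ?KR0 //.
have hK : (4 : R) <= K%:R by rewrite (ler_nat R 4 K).
have := pi0c; rewrite !mulr2n; nra.
Qed.

Lemma KR_tau : K%:R * tau = pi *+ 2.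
Proof. by rewrite /tau mulrC divfK // gt_eqF // KR0. Qed.

Lemma pos_bound q : G q + G q.+1 <= pi ->
  dist_rest W (idx q.+1) <= 2 * sin (G q / 2) * sin (G q.+1 / 2).
Proof.
move=> hab.
have a0 := G_ge0 q; have b0 := G_ge0 q.+1.
have p0 := pi0c.
have hh : 0 <= 2 * sin (G q / 2) * sin (G q.+1 / 2).
  by apply: h_ge0 => //; rewrite mulr2n; lra.
have n1 : idx q != idx q.+1 by apply: idx_neq; rewrite eq_sym modS_neq.
have n2 : idx q.+2 != idx q.+1 by apply: idx_neq; rewrite modS_neq.
have duP : dot (col (idx q.+1) W) (col (idx q) W) = cos (G q).
  by rewrite dotT /G -cosN opprB.
have duQ : dot (col (idx q.+1) W) (col (idx q.+2) W) = cos (G q.+1).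
  by rewrite dotT.
have dPQ : dot (col (idx q) W) (col (idx q.+2) W) = cos (G q + G q.+1).
  by rewrite dotT /G; congr cos; ring.
case: (ltrP 0 (G q + G q.+1)) => hpos; last first.
  have ha : G q = 0 by lra.
  apply: le_trans (dist_rest_le (conv_one W n1)) (le_trans _ hh).
  rewrite vnormE dist_sq (unit_dot (unitW _)) (unit_dot (unitW _)) duP ha cos0.
  by rewrite (_ : 1 - 2 * 1 + 1 = 0) ?sqrtr0 //; ring.
have [t [ht heq]] := pos_real a0 b0 hpos hab.
apply: le_trans (dist_rest_le (conv_two W n2 n1 ht)) _.
rewrite vnormE comb_expand ?unitW // duP duQ dPQ heq h_sq sqrtr_sqr ger0_norm //.
Qed.

Lemma circle_HA : exists k k' : 'I_K, k' != k /\ cos tau <= dot (col k W) (col k' W).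
Proof.
have hsum : \sum_(i < K) G i <= pi *+ 2 by rewrite sumG.
have [q [hq hG]] := avg_exists K0c hsum.
exists (idx q), (idx q.+1); split; first by apply: idx_neq; apply: modS_neq.
rewrite dotT -/(G q); apply: cos_le_mono => //; first exact: G_ge0.
have := tau2_le_pi; have := tau_gt0; rewrite mulr2n; lra.
Qed.

Lemma sum_pairs : \sum_(i < K) (G i + G i.+1) = pi *+ 2 + pi *+ 2.
Proof. by rewrite big_split /= sumG sumG1. Qed.

Lemma pairs_avg : (pi *+ 2 + pi *+ 2) / K%:R = tau *+ 2.
Proof. by rewrite /tau mulrDl mulr2n. Qed.

Lemma h_le q : G q + G q.+1 <= pi ->
  dist_rest W (idx q.+1) <= 1 - cos ((G q + G q.+1) / 2).
Proof.
move=> hab; apply: le_trans (pos_bound hab) _.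
by rewrite h_eq; have := sqr_ge0 (sin ((G q - G q.+1) / 4)); lra.
Qed.

Lemma circle_HC1 : rho_one_vs_rest W <= 1 - cos tau.
Proof.
have hsum : \sum_(i < K) (G i + G i.+1) <= pi *+ 2 + pi *+ 2 by rewrite sum_pairs.
have [q [hq hG]] := avg_exists (F := fun i => G i + G i.+1) K0c hsum.
rewrite pairs_avg in hG.
have ht := tau2_le_pi; have t0 := tau_gt0.
have a0 := G_ge0 q; have b0 := G_ge0 q.+1.
apply: le_trans (rho_rest_le K2c W (idx q.+1)) _.
apply: le_trans (h_le _) _; first by lra.
have : cos tau <= cos ((G q + G q.+1) / 2).
  apply: cos_le_mono; [by lra | | by move: ht; rewrite mulr2n; lra].
  by rewrite ler_pdivrMr //; move: hG; rewrite mulr2n; lra.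
lra.
Qed.

Lemma circle_HC2 : 1 - cos tau <= rho_one_vs_rest W -> Mc W (cos tau).
Proof.
move=> hge.
have hd : forall q, 1 - cos tau <= dist_rest W (idx q.+1).
  by move=> q; apply: le_trans hge (rho_rest_le K2c W _).
have ht := tau2_le_pi; have t0 := tau_gt0; have p0 := pi0c.
have step1 : forall q, tau *+ 2 <= G q + G q.+1.
  move=> q; rewrite leNgt; apply/negP => hlt.
  have a0 := G_ge0 q; have b0 := G_ge0 q.+1.
  have hab : G q + G q.+1 <= pi by lra.
  have := le_trans (hd q) (h_le hab).
  have : cos tau < cos ((G q + G q.+1) / 2).
    apply: cos_lt_mono; [by lra | | by move: ht; rewrite mulr2n; lra].
    by rewrite ltr_pdivrMr //; move: hlt; rewrite mulr2n; lra.
  lra.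
have step2 : forall q, (q < K)%N -> G q + G q.+1 = tau *+ 2.
  apply: (all_eq_avg (F := fun i => G i + G i.+1)) => //.
  by rewrite sum_pairs -pairs_avg mulrC divfK // gt_eqF // KR0.
have step3 : forall q, (q < K)%N -> G q = G q.+1.
  move=> q hq; have e := step2 q hq.
  have a0 := G_ge0 q; have b0 := G_ge0 q.+1.
  have hab : G q + G q.+1 <= pi by lra.
  have := le_trans (hd q) (pos_bound hab); rewrite h_eq e.
  have -> : tau *+ 2 / 2 = tau by rewrite mulr2n; field.
  move=> h.
  have hs : sin ((G q - G q.+1) / 4) = 0.
    have h2 : sin ((G q - G q.+1) / 4) ^+ 2 <= 0 by lra.
    by apply/eqP; rewrite -sqrf_eq0 eq_le h2 sqr_ge0.
  have := sin_eq0_small _ hs.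
  have hb : - (pi / 2) <= (G q - G q.+1) / 4 <= pi / 2.
    by apply/andP; split; rewrite ?ler_pdivlMr ?ler_pdivrMr //; lra.
  by move=> /(_ hb) h0; lra.
have step4 : forall q, (q <= K)%N -> G q = G 0.
  elim=> [//|q IH] hq; rewrite -step3 //; apply: IH; exact: ltnW.
have step5 : G 0 = tau.
  have := sumG; rewrite (eq_bigr (fun _ => G 0)); last by move=> i _; apply: step4; apply: ltnW.
  rewrite sumr_const card_ord -mulr_natl => h.
  by rewrite /tau -h; field; rewrite gt_eqF // KR0.
have step6 : forall n i, (i + n <= K)%N -> T (i + n) - T i = n%:R * tau.
  elim=> [|n IH] i hin; first by rewrite addn0 subrr mul0r.
  have hin' : (i + n <= K)%N by apply: leq_trans hin; rewrite leq_add2l.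
  have hG : G (i + n) = tau by rewrite step4 ?step5 //.
  rewrite /G in hG; have := IH i hin'.
  rewrite addnS -natr1 mulrDl mul1r; lra.
have step7 : forall i j, (i < j)%N -> (j < K)%N -> dot (col (idx i) W) (col (idx j) W) <= cos tau.
  move=> i j ij jK; rewrite dotT.
  have e : j = (i + (j - i))%N by rewrite subnKC // ltnW.
  have hle : (i + (j - i) <= K)%N by rewrite -e ltnW.
  rewrite [in T j]e (step6 _ _ hle).
  apply: cos_mult; first by rewrite subn_gt0.
  by apply: leq_ltn_trans jK; apply: leq_subr.
move=> k k' kk.
have [i [hi ei]] := idx_surj k; have [j [hj ej]] := idx_surj k'.
rewrite -ei -ej in kk *.
case: (ltngtP i j) => hij.
- exact: step7.
- by rewrite dotC; apply: step7.
- by move: kk; rewrite hij eqxx.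
Qed.



End Circle.

Lemma unit2_sq (R : realType) (K : nat) (W : 'M[R]_(2, K)) k :
  vnorm (col k W) = 1 -> W ord0 k ^+ 2 + W ord_max k ^+ 2 = 1.
Proof. by move=> /unit_dot; rewrite dot2 !mxE -!expr2. Qed.

Lemma get_angles (R : realType) (K : nat) (W : 'M[R]_(2, K)) : OB W ->
  exists th : 'I_K -> R, forall k, [/\ 0 <= th k, th k < pi *+ 2,
     cos (th k) = W ord0 k & sin (th k) = W ord_max k].
Proof.
move=> hW.
have := fun k => angle_exists (unit2_sq (hW k)).
move=> /choice [th hth]; exists th => k; exact: hth.
Qed.

Lemma polygon_exists (R : realType) (K : nat) : (4 <= K)%N ->
  exists W0 : 'M[R]_(2, K), OB W0 /\ Mc W0 (cos ((pi : R) *+ 2 / K%:R)).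
Proof.
move=> K4; set tau : R := pi *+ 2 / K%:R.
pose W0 : 'M[R]_(2, K) := \matrix_(i, k) (if i == ord0 then cos (k%:R * tau) else sin (k%:R * tau)).
have hd : forall k k' : 'I_K, dot (col k W0) (col k' W0) = cos (k'%:R * tau - k%:R * tau).
  by move=> k k'; rewrite dot2 !mxE /= cosB; ring.
have step : forall k k' : 'I_K, (k < k')%N -> dot (col k W0) (col k' W0) <= cos tau.
  move=> k k' kk; rewrite hd -mulrBl -natrB ?(ltnW kk) //; apply: cos_mult.
    by rewrite subn_gt0.
  by apply: leq_ltn_trans (ltn_ord k'); apply: leq_subr.
exists W0; split.
- move=> k; rewrite vnormE hd subrr cos0 sqrtr1 //.
- move=> k k' kk; case: (ltngtP k k') => h.
  + exact: step.
  + by rewrite dotC; apply: step.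
  + by move: kk; rewrite (val_inj h) eqxx.
Qed.

Lemma case_circle (R : realType) (K : nat) : (4 <= K)%N ->
  forall W : 'M[R]_(2, K),
    is_argmax_OB (@rho_one_vs_rest R 2 K) W <-> is_argmax_OB (@rho_one_vs_one R 2 K) W.
Proof.
move=> K4.
have K2 : (2 <= K)%N by apply: leq_trans K4.
apply: (abstract_main K2 (c := cos ((pi : R) *+ 2 / K%:R))).
- move=> W hW; have [th hth] := get_angles hW.
  apply: (@circle_HA R K K4 W th) => k; by case: (hth k).
- exact: polygon_exists.
- move=> W hW; have [th hth] := get_angles hW.
  apply: (@circle_HC1 R K K4 W th) => k; by case: (hth k).
- move=> W hW; have [th hth] := get_angles hW.
  apply: (@circle_HC2 R K K4 W th) => k; by case: (hth k).
Qed.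

Unset Implicit Arguments.

Theorem mainTheorem9 (R : realType) (d K : nat) :
  (2 <= K)%N -> (1 <= d)%N -> (d = 2%N \/ (K <= d.+1)%N) ->
  forall W : 'M[R]_(d, K),
    is_argmax_OB (@rho_one_vs_rest R d K) W <-> is_argmax_OB (@rho_one_vs_one R d K) W.
Proof.
move=> K2 d1 hd.
case: (leqP K d.+1) => hK; first exact: case_simplex.
case: hd => [hd2|]; last by rewrite leqNgt hK.
subst d.
by apply: case_circle.
Qed.
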